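(* Let $V$ be a Hilbert space of functions on a domain $\Omega\subset\mathbb{R}^d$ with a norm $\|\cdot\|$, let $V_0\subset V_1\subset\dots\subset V_L\subset V$ be nested finite element spaces, let $u\in V$ be the exact solution of a variational problem $a(u,v)=b(v)$ for all $v\in V$, and let $u_\ell\in V_\ell$ ($\ell=0,\dots,L$) be the corresponding discrete solutions. Set $e_\ell:=u-u_\ell$ and $\theta_\ell:=\|e_\ell\|/\|e_{\ell-1}\|$. Let $0<j<L$ be an integer and $\ell:=L-j$, and suppose there exist constants $\varepsilon>0$ and $\theta>0$ such that $$\theta\le\theta_i\le(1+\varepsilon)\theta<1\quad\text{for all } i\text{ with } \ell\le i\le L.$$ Define $\tilde e_k:=u_L-u_k$ for $k<L$, $\tilde\theta_\ell:=\|\tilde e_\ell\|/\|\tilde e_{\ell-1}\|$, and $\eta_j:=\tilde\theta_\ell^{\,j}\,\|\tilde e_\ell\|$. Write $\theta_\varepsilon:=(1+\varepsilon)\theta$. Then $$C_1\|e_L\|\le\eta_j\le C_2\|e_L\|,$$ where $$C_1=(1+\varepsilon)^{-j}\frac{(1-\theta_\varepsilon^{j})^{j+1}}{(1+\theta_\varepsilon^{j+1})^{j}},\qquad C_2=(1+\varepsilon)^{j}\frac{(1+\theta_\varepsilon^{j})^{j+1}}{(1-\theta_\varepsilon^{j+1})^{j}}.$$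
   Context: $a:V\times V\to\mathbb{R}$ is a bilinear form and $b:V\to\mathbb{R}$ a linear form; the discrete solutions $u_\ell\in V_\ell$ are the (exact) Galerkin solutions on the spaces $V_\ell$, which are associated with a sequence of nested triangulations of $\Omega$ obtained by successive uniform refinement. $e_\ell$ is the discretization error on level $\ell$, $\theta_\ell$ the grid convergence factor, $\tilde e_\ell$ the approximation of $e_\ell$ using the finest solution $u_L$ in place of $u$, and $\eta_j$ the resulting a posteriori estimate of $\|e_L\|$. *)

(* Defs.v *)
From HB Require Import structures.
From mathcomp Require Import all_boot all_order all_algebra.
From mathcomp Require Import all_classical all_reals all_analysis.
Set Implicit Arguments. Unset Strict Implicit. Unset Printing Implicit Defensive.
Import Order.TTheory GRing.Theory Num.Theory.
Import numFieldNormedType.Exports.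
Local Open Scope classical_set_scope.
Local Open Scope ring_scope.

Section Defs.
Context {R : realType} {V : normedModType R}.

(* ip is an inner product on V which induces the norm of V (so that V,
   when complete, is a real Hilbert space with norm `|.|). *)
Definition is_inner_product (ip : V -> V -> R) : Prop :=
  [/\ forall x y, ip x y = ip y x,
      forall (c : R) x y z, ip (c *: x + y) z = c * ip x z + ip y z
    & forall x, ip x x = `|x| ^+ 2].

Definition is_subspace (S : set V) : Prop :=
  [/\ S 0, forall x y, S x -> S y -> S (x + y)
    & forall (c : R) x, S x -> S (c *: x)].

Definition is_fin_dim_subspace (S : set V) : Prop :=
  is_subspace S /\
  exists s : seq V, forall x,
    S x <-> exists c : nat -> R, x = \sum_(i < size s) c i *: nth 0 s i.

Definition is_bilinear (a : V -> V -> R) : Prop :=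
  (forall (c : R) x y z, a (c *: x + y) z = c * a x z + a y z) /\
  (forall (c : R) x y z, a z (c *: x + y) = c * a z x + a z y).

Definition is_linear_form (b : V -> R) : Prop :=
  forall (c : R) x y, b (c *: x + y) = c * b x + b y.

Definition err (u : V) (us : nat -> V) (k : nat) : V := u - us k.

Definition conv_factor (u : V) (us : nat -> V) (k : nat) : R :=
  `|err u us k| / `|err u us k.-1|.

Definition approx_err (us : nat -> V) (L k : nat) : V := us L - us k.

Definition approx_conv_factor (us : nat -> V) (L k : nat) : R :=
  `|approx_err us L k| / `|approx_err us L k.-1|.

Definition eta_est (us : nat -> V) (L j : nat) : R :=
  approx_conv_factor us L (L - j) ^+ j * `|approx_err us L (L - j)|.

End Defs.

(* Main.v *)
Require Import Defs.
From HB Require Import structures.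
From mathcomp Require Import all_boot all_order all_algebra.
From mathcomp Require Import all_classical all_reals all_analysis.
From mathcomp Require Import ring lra.
Import Order.TTheory GRing.Theory Num.Theory.
Import numFieldNormedType.Exports.
Local Open Scope classical_set_scope.
Local Open Scope ring_scope.

Lemma upper_alg (R : realFieldType) (A B E y z t p s q : R) (j : nat) :
  0 < A -> 0 < B -> 0 <= t -> t < 1 -> 0 <= p -> p <= 1 -> 0 <= s ->
  (B/A)^+j <= p -> p = s * q -> q * B <= E -> E <= p * B -> B <= t * A ->
  0 <= y -> y <= B + E -> A - E <= z ->
  (y/z)^+j * y <= s * ((1 + p)^+j.+1 / (1 - t * p)^+j) * E.
Proof.
move=> A0 B0 t0 t1 p0 p1 s0 hBA hp hq hE hB y0 hy hz.
have tp1 : t * p < 1 by nra.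
have Z0 : 0 < A * (1 - t * p) by nra.
have hZ : A * (1 - t * p) <= z by nra.
have z0 : 0 < z by lra.
have hY : y <= B * (1 + p) by nra.
have step : (y/z)^+j * y <= (B * (1 + p) / (A * (1 - t * p)))^+j * (B * (1 + p)).
  apply: ler_pM.
  - by apply: exprn_ge0; apply: divr_ge0; lra.
  - exact: y0.
  - apply: lerXn2r; rewrite ?nnegrE.
    + by apply: divr_ge0; lra.
    + by apply: divr_ge0; [apply: mulr_ge0; lra | exact: ltW].
    + apply: ler_pM; [lra | by rewrite invr_ge0; lra | lra | by rewrite lef_pV2 ?posrE].
  - exact: hY.
apply: (le_trans step).
have eq1 : (B * (1 + p) / (A * (1 - t * p)))^+j * (B * (1 + p)) =
   ((B/A)^+j * B) * ((1 + p)^+j.+1 / (1 - t * p)^+j).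
  rewrite !expr_div_n !exprMn exprS.
  have : A^+j != 0 by rewrite expf_neq0 // gt_eqF.
  have : (1 - t * p)^+j != 0 by rewrite expf_neq0 //; lra.
  move=> h1 h2; field; apply/andP; split => //.
rewrite eq1.
have K0 : 0 <= (1 + p)^+j.+1 / (1 - t * p)^+j.
  by apply: divr_ge0; apply: exprn_ge0; lra.
have X : (B/A)^+j * B <= s * E.
  apply: (@le_trans _ _ (p * B)); first by apply: ler_wpM2r => //; lra.
  rewrite hp -mulrA; apply: ler_wpM2l => //.
set K := (_ / _) in K0 *.
apply: (le_trans (ler_wpM2r K0 X)).
by rewrite mulrAC.
Qed.

Lemma lower_alg (R : realFieldType) (A B E y z t p s q : R) (j : nat) :
  0 < A -> 0 < B -> 0 <= t -> t < 1 -> 0 <= p -> p < 1 -> 0 < s ->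
  q <= (B/A)^+j -> p = s * q -> E <= p * B -> B <= t * A ->
  B - E <= y -> z <= A + E -> A - E <= z ->
  s^-1 * ((1 - p)^+j.+1 / (1 + t * p)^+j) * E <= (y/z)^+j * y.
Proof.
move=> A0 B0 t0 t1 p0 p1 s0 hBA hp hE hB hy hz hz'.
have tp1 : t * p < 1 by nra.
have z0 : 0 < z by nra.
have Z0 : 0 < A * (1 + t * p) by nra.
have hZ : z <= A * (1 + t * p) by nra.
have hY : B * (1 - p) <= y by nra.
have Y0 : 0 < B * (1 - p) by nra.
have step : (B * (1 - p) / (A * (1 + t * p)))^+j * (B * (1 - p)) <= (y/z)^+j * y.
  apply: ler_pM.
  - by apply: exprn_ge0; apply: divr_ge0; lra.
  - lra.
  - apply: lerXn2r; rewrite ?nnegrE.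
    + by apply: divr_ge0; lra.
    + by apply: divr_ge0; lra.
    + apply: ler_pM; [lra | by rewrite invr_ge0; lra | lra | by rewrite lef_pV2 ?posrE].
  - exact: hY.
apply: le_trans step.
have eq1 : (B * (1 - p) / (A * (1 + t * p)))^+j * (B * (1 - p)) =
   ((B/A)^+j * B) * ((1 - p)^+j.+1 / (1 + t * p)^+j).
  rewrite !expr_div_n !exprMn exprS.
  have : A^+j != 0 by rewrite expf_neq0 // gt_eqF.
  have : (1 + t * p)^+j != 0 by rewrite expf_neq0 //; nra.
  move=> h1 h2; field; apply/andP; split => //.
rewrite eq1.
have K0 : 0 <= (1 - p)^+j.+1 / (1 + t * p)^+j.
  by apply: divr_ge0; apply: exprn_ge0; nra.
have X : s^-1 * E <= (B/A)^+j * B.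
  apply: (@le_trans _ _ (q * B)); last by apply: ler_wpM2r => //; lra.
  rewrite ler_pdivrMl // mulrA -hp //.
set K := (_ / _) in K0 *.
apply: le_trans (ler_wpM2r K0 X).
by rewrite mulrAC.
Qed.

Lemma pos_of_ratio (R : realFieldType) (a b th : R) :
  0 <= a -> 0 <= b -> 0 < th -> th <= a / b -> 0 < a /\ 0 < b.
Proof.
move=> a0 b0 th0 h.
have q0 : 0 < a / b by apply: lt_le_trans h.
split.
  move: a0; rewrite le_eqVlt => /orP [/eqP ha|//].
  by move: q0; rewrite -ha mul0r ltxx.
move: b0; rewrite le_eqVlt => /orP [/eqP hb|//].
by move: q0; rewrite -hb invr0 mulr0 ltxx.
Qed.

Arguments pos_of_ratio {R a b th}.

Lemma chain (R : realFieldType) (f : nat -> R) (l n : nat) (th t : R) :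
  (forall i, 0 <= f i) -> 0 < th ->
  (forall i, (l <= i)%N -> (i <= l + n)%N ->
     th <= f i / f i.-1 /\ f i / f i.-1 <= t) ->
  forall k, (k <= n)%N -> th^+k * f l <= f (l+k)%N /\ f (l+k)%N <= t^+k * f l.
Proof.
move=> f0 th0 H; elim=> [|k IH] hk.
  by rewrite addn0 expr0 mul1r; split.
have [c1 c2] := IH (ltnW hk).
have [h1 h2] := H (l + k.+1)%N (leq_addr _ _) (ltac:(by rewrite leq_add2l)).
rewrite addnS /= in h1 h2 *.
have [_ pk] := pos_of_ratio (f0 _) (f0 _) th0 h1.
have e : f (l + k)%N.+1 = f (l + k)%N.+1 / f (l + k)%N * f (l + k)%N.
  by rewrite divfK // gt_eqF.
have r0 : 0 <= f (l + k)%N.+1 / f (l + k)%N by apply: divr_ge0.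
split.
  rewrite exprS -mulrA e.
  apply: ler_pM; [exact: ltW | apply: mulr_ge0; [apply: exprn_ge0; exact: ltW | exact: f0] | exact: h1 | exact: c1].
rewrite exprS -mulrA e.
apply: ler_pM; [exact: r0 | exact: f0 | exact: h2 | exact: c2].
Qed.

Arguments chain {R f l n th t}.

Theorem theorem1 (R : realType) (V : completeNormedModType R)
  (ip : V -> V -> R) (a : V -> V -> R) (b : V -> R)
  (Vs : nat -> set V) (L : nat) (u : V) (us : nat -> V)
  (j : nat) (eps theta : R) :
  is_inner_product ip ->
  is_bilinear a -> is_linear_form b ->
  (forall l, (l <= L)%N -> is_fin_dim_subspace (Vs l)) ->
  (forall l, (l < L)%N -> Vs l `<=` Vs l.+1) ->
  (forall v, a u v = b v) ->
  (forall l, (l <= L)%N -> Vs l (us l) /\ forall v, Vs l v -> a (us l) v = b v) ->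
  (0 < j)%N -> (j < L)%N ->
  0 < eps -> 0 < theta ->
  (forall i, (L - j <= i)%N -> (i <= L)%N ->
     theta <= conv_factor u us i /\ conv_factor u us i <= (1 + eps) * theta) ->
  (1 + eps) * theta < 1 ->
  let theta_eps := (1 + eps) * theta in
  let C1 := (1 + eps) ^- j * ((1 - theta_eps ^+ j) ^+ j.+1
                               / (1 + theta_eps ^+ j.+1) ^+ j) in
  let C2 := (1 + eps) ^+ j * ((1 + theta_eps ^+ j) ^+ j.+1
                               / (1 - theta_eps ^+ j.+1) ^+ j) in
  C1 * `|err u us L| <= eta_est us L j /\ eta_est us L j <= C2 * `|err u us L|.
Proof.
move=> hip hbil hlin hfin hnest hu hus j0 jL eps0 th0 H tlt1 te C1 C2.
set f := fun i => `|err u us i|.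
have f0 : forall i, 0 <= f i by move=> i; exact: normr_ge0.
set l := (L - j)%N.
have lL : (l + j)%N = L by rewrite /l subnK // ltnW.
have Hc : forall i, (l <= i)%N -> (i <= l + j)%N ->
    theta <= f i / f i.-1 /\ f i / f i.-1 <= te.
  by move=> i h1 h2; apply: H => //; rewrite -lL.
have [cl cu] := chain f0 th0 Hc j (leqnn j).
rewrite lL in cl cu.
have [hl1 hl2] := H l (leqnn _) (leq_subr _ _).
have [Bp Ap] := pos_of_ratio (f0 l) (f0 l.-1) th0 hl1.
have te0 : 0 <= te by rewrite /te; apply: mulr_ge0; lra.
have hB : f l <= te * f l.-1 by rewrite -ler_pdivrMr.
have hB' : theta * f l.-1 <= f l by rewrite -ler_pdivlMr.
have BA0 : 0 <= f l / f l.-1 by apply: divr_ge0; exact: ltW.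
have hBAu : (f l / f l.-1)^+j <= te^+j.
  by apply: lerXn2r; rewrite ?nnegrE //.
have hBAl : theta^+j <= (f l / f l.-1)^+j.
  by apply: lerXn2r; rewrite ?nnegrE //; exact: ltW.
have hp : te^+j = (1 + eps)^+j * theta^+j by rewrite /te exprMn.
have ey : forall k, approx_err us L k = err u us k - err u us L.
  by move=> k; rewrite /approx_err /err opprB [RHS]addrC addrA subrK.
have yu : `|approx_err us L l| <= f l + f L by rewrite ey; exact: ler_normB.
have yl : f l - f L <= `|approx_err us L l| by rewrite ey; exact: lerB_dist.
have zu : `|approx_err us L l.-1| <= f l.-1 + f L by rewrite ey; exact: ler_normB.
have zl : f l.-1 - f L <= `|approx_err us L l.-1| by rewrite ey; exact: lerB_dist.
have p0 : 0 <= te^+j by exact: exprn_ge0.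
have p1 : te^+j < 1 by rewrite exprn_ilt1 // -lt0n.
have s0 : 0 < (1 + eps)^+j by apply: exprn_gt0; lra.
rewrite /C1 /C2 /eta_est /approx_conv_factor -/l [te ^+ j.+1]exprS.
split.
  apply: (@lower_alg _ (f l.-1) (f l) (f L) `|approx_err us L l| `|approx_err us L l.-1| te (te^+j) ((1 + eps)^+j) (theta^+j) j) => //.
apply: (@upper_alg _ (f l.-1) (f l) (f L) `|approx_err us L l| `|approx_err us L l.-1| te (te^+j) ((1 + eps)^+j) (theta^+j) j) => //.
- exact: (ltW p1).
- exact: (ltW s0).
Qed.
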